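(* Fix any constant $0<\varepsilon<1/4$, and let $\delta(n)\le 1/(50n^2)$ for every positive integer $n$. Then for every positive integer $n$ and every finite totally ordered set $X$: if there exists an $(\varepsilon,\delta(n))$-differentially private algorithm $A:X^n\to X$ that solves the interior point problem on $X$ with probability at least $3/4$ (i.e. for every $D\in X^n$, $\Pr[\min D\le A(D)\le \max D]\ge 3/4$), then $n\ge \Omega(\log^*|X|)$, where the constant implied by $\Omega(\cdot)$ does not depend on $n$ or $X$.
   Context: A randomized algorithm $M:X^n\to Y$ is $(\varepsilon,\delta)$-differentially private if for every two databases $D,D'\in X^n$ differing in exactly one row and every set $T\subseteq Y$, $\Pr[M(D)\in T]\le e^{\varepsilon}\Pr[M(D')\in T]+\delta$. For a totally ordered set $X$, an algorithm $A:X^n\to X$ solves the interior point problem with error probability $\beta$ if for every database $D\in X^n$, $\Pr[\min D\le A(D)\le\max D]\ge 1-\beta$ over the coins of $A$; its sample complexity is $n$. $\log^*$ denotes the iterated base-2 logarithm. *)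

(* Defs.v *)
From HB Require Import structures.
From mathcomp Require Import all_boot all_order all_algebra.
From mathcomp Require Import all_classical all_reals.
From mathcomp Require Import sequences exp.
Set Implicit Arguments. Unset Strict Implicit. Unset Printing Implicit Defensive.
Import Order.TTheory GRing.Theory Num.Theory.
Local Open Scope ring_scope.

Fixpoint logstar_fuel (R : realType) (k : nat) (x : R) : nat :=
  match k with
  | 0 => 0%N
  | k'.+1 => if x <= 1 then 0%N else (logstar_fuel k' (ln x / ln 2)).+1
  end.

(* log* m for a natural number m; fuel m is always sufficient since log* m <= m. *)
Definition logstar (R : realType) (m : nat) : nat := logstar_fuel m (m%:R : R).

Section DP.
Context (R : realType) (d : Order.disp_t) (X : finOrderType d) (n : nat).

Definition is_rand_alg (A : n.-tuple X -> {ffun X -> R}) : Prop :=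
  forall D, (forall x, 0 <= A D x) /\ \sum_(x : X) A D x = 1.

Definition neighbors (D D' : n.-tuple X) : bool :=
  #|[set i : 'I_n | tnth D i != tnth D' i]| == 1%N.

Definition diff_private (eps delta : R) (A : n.-tuple X -> {ffun X -> R}) : Prop :=
  forall D D' : n.-tuple X, neighbors D D' ->
  forall T : {set X},
    \sum_(x in T) A D x <= expR eps * \sum_(x in T) A D' x + delta.

Definition tmin (D : n.-tuple X) (y : X) : X := foldr Order.min (head y D) D.
Definition tmax (D : n.-tuple X) (y : X) : X := foldr Order.max (head y D) D.

(* y is an interior point of D: min D <= y <= max D (for n >= 1 the default
   value y of head is never used). *)
Definition interior (D : n.-tuple X) (y : X) : bool :=
  (tmin D y <= y)%O && (y <= tmax D y)%O.

Definition solves_interior (p : R) (A : n.-tuple X -> {ffun X -> R}) : Prop :=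
  forall D : n.-tuple X, p <= \sum_(x | interior D x) A D x.

End DP.

(* Main.v *)
Require Import Defs.
From HB Require Import structures.
From mathcomp Require Import all_boot all_order all_algebra.
From mathcomp Require Import all_classical all_reals.
From mathcomp Require Import sequences exp.
From mathcomp Require Import zify ring lra.
Import Order.TTheory GRing.Theory Num.Theory.
Local Open Scope ring_scope.

(* Proof via Ramsey's theorem for
   ordered hypergraphs (with explicit tower bounds) plus a DP argument. *)

Local Close Scope ring_scope.
Module RamseyPart.
Set Implicit Arguments. Unset Strict Implicit. Unset Printing Implicit Defensive.
Section Ramsey.
Variables (T : eqType) (C : finType) (x0 : T).

Fixpoint subseqs (s : seq T) : seq (seq T) :=
  if s is x :: s' then subseqs s' ++ map (cons x) (subseqs s') else [:: [::]].

Lemma size_subseqs s : size (subseqs s) = 2 ^ size s.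
Proof. elim: s => //= x s IH; rewrite size_cat size_map IH expnS; lia. Qed.

Lemma mem_subseqs u s : subseq u s -> u \in subseqs s.
Proof.
elim: s u => [|x s IH] u /=; first by move/eqP->.
case: u => [|y u].
  move=> _; rewrite mem_cat; apply/orP; left; apply: IH; exact: sub0seq.
case: eqP => [->|_] H; rewrite mem_cat; apply/orP; [right|left; exact: IH].
by rewrite mem_map; [exact: IH | move=> a b []].
Qed.

Variable col : seq T -> C.

Lemma count_sum (f : T -> C) (c : seq T) :
  size c = \sum_(i : C) count (fun x => f x == i) c.
Proof.
elim: c => [|y c IH] /=; first by rewrite big1.
rewrite big_split /= -IH (bigD1 (f y)) //= eqxx big1 // => i /negbTE.
by rewrite eq_sym => ->.
Qed.

Definition refine1 (u : seq T) (c : seq T) : seq T :=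
  match c with
  | [::] => [::]
  | y :: _ => let f := fun x => col (rcons u x) in
     seq.filter (fun x => f x == fintype.arg_max (f y) xpredT (fun i => count (fun z => f z == i) c)) c
  end.

Lemma pigeon (f : T -> C) (c : seq T) (i : C) :
  (forall j, count (fun x => f x == j) c <= count (fun x => f x == i) c) ->
  size c <= #|C| * size (seq.filter (fun x => f x == i) c).
Proof.
move=> Hi; rewrite (count_sum f) size_filter.
have -> : #|C| * count (fun x => f x == i) c =
   \sum_(j : C) count (fun x => f x == i) c by rewrite sum_nat_const.
by apply: leq_sum => j _; exact: Hi.
Qed.

Lemma refine1_size u c : size c <= #|C| * size (refine1 u c).
Proof.
case: c => [|y c] //.
rewrite /refine1; case: arg_maxnP => // i _ Hi.
by apply: pigeon => j; exact: Hi.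
Qed.

Lemma refine1_sub u c x : x \in refine1 u c -> x \in c.
Proof. by case: c => // y c; rewrite /refine1 mem_filter => /andP[]. Qed.

Lemma refine1_const u c x y : x \in refine1 u c -> y \in refine1 u c ->
  col (rcons u x) = col (rcons u y).
Proof.
case: c => // z c; rewrite /refine1 !mem_filter => /andP[/eqP-> _] /andP[/eqP-> _].
by [].
Qed.

Definition refineAll (U : seq (seq T)) (c : seq T) := foldr refine1 c U.

Lemma refineAll_sub U c x : x \in refineAll U c -> x \in c.
Proof. elim: U => //= u U IH /refine1_sub; exact: IH. Qed.

Lemma refineAll_const U c u x y : u \in U -> x \in refineAll U c ->
  y \in refineAll U c -> col (rcons u x) = col (rcons u y).
Proof.
elim: U => //= v U IH; rewrite inE => /orP[/eqP->|uU] Hx Hy.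
  exact: refine1_const Hx Hy.
exact: IH uU (refine1_sub Hx) (refine1_sub Hy).
Qed.

Lemma refineAll_size U c : size c <= #|C| ^ size U * size (refineAll U c).
Proof.
elim: U => [|u U IH] /=; first by rewrite mul1n.
apply: (leq_trans IH).
have := leq_mul (leqnn (#|C| ^ size U)) (refine1_size u (refineAll U c)).
by move=> H; apply: (leq_trans H); rewrite expnS mulnA [#|C| ^ _ * _]mulnC.
Qed.

Fixpoint build (f : nat) (p c : seq T) : seq T :=
  if f is f'.+1 then
    match refineAll (subseqs p) c with
    | [::] => [::]
    | x :: c' => x :: build f' (rcons p x) c'
    end
  else [::].

Lemma build_sub f p c x : x \in build f p c -> x \in c.
Proof.
elim: f p c => //= f IH p c.
case E: (refineAll (subseqs p) c) => [|y c'] //.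
rewrite inE => /orP[/eqP->|/IH H]; apply: (@refineAll_sub (subseqs p));
  by rewrite E inE ?eqxx ?H ?orbT.
Qed.

Lemma refine1_subseq u c : subseq (refine1 u c) c.
Proof. case: c => // y c; rewrite /refine1; exact: filter_subseq. Qed.

Lemma refineAll_subseq U c : subseq (refineAll U c) c.
Proof.
elim: U => //= u U IH; exact: subseq_trans (refine1_subseq _ _) IH.
Qed.

Lemma build_subseq f p c : subseq (build f p c) c.
Proof.
elim: f p c => [|f IH] p c /=; first exact: sub0seq.
case E: (refineAll (subseqs p) c) => [|y c'] //; first exact: sub0seq.
apply: subseq_trans (refineAll_subseq (subseqs p) c); rewrite E /= eqxx.
exact: IH.
Qed.

Lemma build_size b f p c : #|C| <= 2 ^ b ->
  2 ^ ((b.+1) * 2 ^ (size p + 2 * f)) <= size c -> size (build f p c) = f.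
Proof.
move=> HC; elim: f p c => //= f IH p c Hc.
have Hs := refineAll_size (subseqs p) c; rewrite size_subseqs in Hs.
case E: (refineAll (subseqs p) c) => [|y c'].
  rewrite E /= muln0 in Hs.
  by have := leq_trans Hc Hs; rewrite leqn0 expn_eq0.
rewrite E /= in Hs; congr S; apply: IH; rewrite size_rcons.
set g := b.+1 * 2 ^ (size p + 2 * f).+1.
have Hg : g.*2 = b.+1 * 2 ^ (size p + 2 * f.+1).
  rewrite /g -muln2 -mulnA -expnSr; congr (_ * 2 ^ _); lia.
rewrite -Hg -addnn expnD in Hc.
have HQ : #|C| ^ 2 ^ size p <= 2 ^ (b * 2 ^ size p).
  by rewrite expnM leq_exp2r // expn_gt0.
have HQg : (2 ^ (b * 2 ^ size p)).*2 <= 2 ^ g.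
  rewrite -mul2n -expnS leq_exp2l // /g.
  have : 2 ^ size p <= 2 ^ (size p + 2 * f).+1 by rewrite leq_exp2l //; lia.
  have : 0 < 2 ^ size p by rewrite expn_gt0.
  nia.
have H1 := leq_trans Hc Hs.
have H2 : 2 ^ g * 2 ^ g <= 2 ^ (b * 2 ^ size p) * (size c').+1.
  apply: (leq_trans H1); by rewrite leq_mul2r HQ orbT.
have Hpos : 0 < 2 ^ (b * 2 ^ size p) by rewrite expn_gt0.
move: H2 HQg Hpos; set P := 2 ^ g; set Q := 2 ^ (b * 2 ^ size p).
rewrite -!muln2. nia.
Qed.

Definition EH (p e : seq T) := forall u i j, i < j < size e ->
  subseq u (p ++ take i e) ->
  col (rcons u (nth x0 e i)) = col (rcons u (nth x0 e j)).

Lemma build_EH f p c : EH p (build f p c).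
Proof.
rewrite /EH; elim: f p c => [|f IH] p c /=; first by move=> u i j; rewrite /= ltn0 andbF.
case E: (refineAll (subseqs p) c) => [|y c'] //=; first by move=> u i j; rewrite /= ltn0 andbF.
move=> u [|i] [|j] //=.
  move=> Hj Hu; rewrite cats0 in Hu.
  apply: (@refineAll_const (subseqs p) c); first exact: (mem_subseqs Hu).
    by rewrite E mem_head.
  rewrite E inE; apply/orP; right; apply: (@build_sub f (rcons p y)).
  by rewrite mem_nth.
move=> /andP[Hij Hj] Hu.
apply: IH; first by apply/andP; split; rewrite -ltnS.
by rewrite cat_rcons.
Qed.
End Ramsey.

Lemma rcons_subseq_nth (T : eqType) (x0 : T) u x l : subseq (rcons u x) l ->
  exists i, [/\ i < size l, nth x0 l i = x & subseq u (take i l)].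
Proof.
elim: l u => [|y l IH] u /=; first by case: u.
case: u => [|a u] /=.
  case: eqP => [->|_] H; first by exists 0.
  have [i [Hi Hn Hs]] := IH [::] H; exists i.+1; split => //.
case: eqP => [->|Hay] H.
  have [i [Hi Hn Hs]] := IH u H; exists i.+1; split => //=; by rewrite eqxx.
have [i [Hi Hn Hs]] := IH (a :: u) H; exists i.+1; split => //=.
by move/eqP/negbTE: Hay => ->.
Qed.

Definition rstep (b N : nat) := 2 ^ (b.+1 * 2 ^ (2 * N.+1)).

Lemma ramsey (T : eqType) (C : finType) (x0 : T) (b N0 r : nat) :
  #|C| <= 2 ^ b -> forall (col : seq T -> C) (s : seq T),
  iter r (rstep b) N0 <= size s ->
  exists h, [/\ subseq h s, size h = N0 &
    exists c0, forall t, subseq t h -> size t = r -> col t = c0].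
Proof.
move=> HC; elim: r => [|r IH] col s /= Hs.
  exists (take N0 s); split; [exact: take_subseq | by rewrite size_takel |].
  by exists (col [::]) => t _ /size0nil ->.
set N := iter r (rstep b) N0 in IH Hs.
set e := build col N.+1 [::] s.
have He : size e = N.+1 by apply: build_size HC _; rewrite add0n.
set z := nth x0 e N.
have HsN : N <= size (take N e) by rewrite size_takel // He.
have [h [Hh Hsz [c0 Hc0]]] := IH (fun u => col (rcons u z)) (take N e) HsN.
exists h; split => //.
  exact: subseq_trans Hh (subseq_trans (take_subseq _ _) (build_subseq _ _ _ _)).
exists c0 => t; case/lastP: t => [|u x] //.
move=> Hux; rewrite size_rcons => -[Hu].
have [i [Hi Hn Hs']] := rcons_subseq_nth x0 (subseq_trans Hux Hh).
rewrite size_takel ?He // in Hi.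
rewrite nth_take // in Hn; rewrite take_takel // in Hs'; last exact: ltnW.
have HE := @build_EH T C x0 col N.+1 [::] s u i N.
rewrite -Hn HE.
- by apply: Hc0 => //; exact: subseq_trans (subseq_rcons _ _) Hux.
- by rewrite -/e Hi He /=.
- exact: Hs'.
Qed.


Fixpoint tow (j : nat) : nat := if j is j'.+1 then 2 ^ tow j' else 1.

Lemma tow_mono j k : j <= k -> tow j <= tow k.
Proof.
move=> /subnKC <-; elim: (k - j) => [|d IH]; first by rewrite addn0.
rewrite addnS /=; apply: (leq_trans IH); exact: ltnW (ltn_expl _ (ltnSn 1)).
Qed.

Lemma three_le_pow N : 4 <= N -> 3 * N <= 2 ^ N.
Proof.
elim: N => // N IH; rewrite leq_eqVlt => /orP[/eqP<- //|HN].
rewrite expnS; have := IH HN; lia.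
Qed.

Lemma rstep_le b N : b + 3 <= N -> 4 <= N -> rstep b N <= 2 ^ (2 ^ (2 ^ N)).
Proof.
move=> H1 H2; rewrite /rstep leq_exp2l //.
have Hb : b.+1 <= 2 ^ b.+1 by exact: ltnW (ltn_expl _ (ltnSn 1)).
apply: (leq_trans (leq_mul Hb (leqnn _))); rewrite -expnD leq_exp2l //.
have := three_le_pow H2; lia.
Qed.

Lemma rstep_ge b N : N <= rstep b N.
Proof.
rewrite /rstep; apply: ltnW; apply: (leq_trans (ltn_expl N (ltnSn 1))).
rewrite leq_exp2l //.
have : N < 2 ^ (2 * N.+1) by apply: (leq_trans (ltn_expl N (ltnSn 1))); rewrite leq_exp2l //; lia.
lia.
Qed.

Lemma iter_rstep b N0 h0 r : b + 3 <= N0 -> 4 <= N0 -> N0 <= tow h0 ->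
  N0 <= iter r (rstep b) N0 /\ iter r (rstep b) N0 <= tow (h0 + 3 * r).
Proof.
move=> H1 H2 H3; elim: r => [|r [IH1 IH2]] /=; first by rewrite addn0.
split; first exact: leq_trans IH1 (rstep_ge _ _).
apply: (leq_trans (rstep_le _ _)); try lia.
have -> : h0 + 3 * r.+1 = (h0 + 3 * r).+3 by lia.
by rewrite /= !leq_exp2l.
Qed.

Lemma tow_gt j : j < tow j.
Proof. elim: j => // j IH /=; exact: leq_ltn_trans IH (ltn_expl _ (ltnSn 1)). Qed.

Lemma N0_bound n : (32 * n + 1) * (n + 1) + 4 * n + 8 <= tow (n + 4).
Proof.
have Hn : n < 2 ^ n := ltn_expl _ (ltnSn 1).
have H2 : 2 ^ (2 * n + 7) <= tow (n + 4).
  rewrite addn4 /= leq_exp2l //.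
  have H3 : 2 ^ n.+3 <= tow n.+3 by rewrite /= leq_exp2l //; exact: tow_gt.
  apply: leq_trans H3; rewrite !expnS; lia.
apply: leq_trans H2.
have -> : 2 ^ (2 * n + 7) = 128 * (2 ^ n * 2 ^ n) by rewrite -expnD -[128]/(2 ^ 7) -expnD; congr (2 ^ _); lia.
nia.
Qed.
End RamseyPart.
Import RamseyPart.
Unset Implicit Arguments.
Local Open Scope ring_scope.

Lemma logstar_tow (R : realType) j f (x : R) :
  x <= (tow j)%:R -> (logstar_fuel f x <= j)%N.
Proof.
elim: j f x => [|j IH] [|f] x //= Hx.
  by rewrite Hx.
case: ifP => // Hx1; apply: IH.
have x0 : 0 < x by apply: lt_trans (ltr01 : (0:R) < 1) _; rewrite ltNge Hx1.
have l2 : 0 < ln (2:R) by apply: ln_gt0; rewrite ltr1n.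
rewrite ler_pdivrMr // mulr_natl -lnXn ?ltr0n // ler_ln ?posrE //.
  by rewrite -natrX.
by rewrite exprn_gt0 // ltr0n.
Qed.

Definition ins (dd : nat -> nat) (j r x : nat) : nat :=
  if (x < j)%N then dd x else if x == j then r else dd x.-1.

Lemma ins_homo (dd : nat -> nat) j r :
  {homo dd : a b / (a < b)%N} -> ((0 < j)%N -> (dd j.-1 < r)%N) -> (r < dd j)%N ->
  {homo ins dd j r : a b / (a < b)%N}.
Proof.
move=> Hd H1 H2.
have Hle : forall a b, (a <= b)%N -> (dd a <= dd b)%N.
  move=> a b; rewrite leq_eqVlt => /orP[/eqP->//|/Hd]; exact: ltnW.
move=> a b Hab; rewrite /ins.
case: (ltnP a j) => Haj.
  case: (ltnP b j) => Hbj; first exact: Hd.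
  case: eqP => [Eb|Eb].
    apply: leq_ltn_trans (H1 _); last by lia.
    apply: Hle; lia.
  apply: Hd; lia.
have Hbj : (j < b)%N by lia.
rewrite (ltnNge b) (ltnW Hbj) /= (gtn_eqF Hbj).
case: eqP => [Ea|Ea].
  apply: leq_trans H2 _; apply: Hle; lia.
apply: Hd; lia.
Qed.

Lemma ins_bump dd j r k : ins dd j r (bump j k) = dd k.
Proof.
rewrite /ins /bump; case: (leqP j k) => H /=.
  by rewrite add1n (ltnNge k.+1) (leqW H) /= gtn_eqF.
by rewrite add0n H.
Qed.

Lemma ins_j dd j r : ins dd j r j = r.
Proof. by rewrite /ins ltnn eqxx. Qed.

Lemma subseq_iota_sorted (l : seq nat) m N :
  sorted ltn l -> all (fun x => (m <= x < m + N)%N) l -> subseq l (iota m N).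
Proof.
elim: N m l => [|N IH] m l.
  by case: l => //= x l _; rewrite addn0; case: (leqP m x).
case: l => [|x l] //= Hs /andP[Hx Hl].
have Hall : all (ltn x) l by exact: order_path_min ltn_trans Hs.
case: eqP => [Exm|Exm].
  subst x; apply: IH; first exact: path_sorted Hs.
  apply/allP => y Hy; move/allP: Hl => /(_ y Hy); move/allP: Hall => /(_ y Hy).
  rewrite /=; lia.
apply: IH => //.  
apply/allP => y; rewrite inE => /orP[/eqP->|Hy]; first by move: Hx; lia.
move/allP: Hl => /(_ y Hy); move/allP: Hall => /(_ y Hy).
move: Hx; rewrite /=; lia.
Qed.

Lemma ins_bound (dd : nat -> nat) j r m M : (forall y, (y <= m)%N -> (dd y < M)%N) ->
  (r < M)%N -> forall x, (x <= m)%N -> (ins dd j r x < M)%N.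
Proof.
move=> Hd Hr x Hx; rewrite /ins; case: ifP => _; first exact: Hd.
case: ifP => _ //; apply: Hd; lia.
Qed.

Definition d0 k := (4 * k + 4)%N.
Definition d1 i k := if k == i then (4 * i + 6)%N else d0 k.
Definition valid (dd : nat -> nat) j r n M : Prop :=
  [/\ {homo dd : a b / (a < b)%N}, (0 < j)%N -> (dd j.-1 < r)%N, (r < dd j)%N,
      (j <= n)%N & forall x, (x <= n)%N -> (ins dd j r x < M)%N].

Lemma d0_homo : {homo d0 : a b / (a < b)%N}.
Proof. rewrite /d0 => a b; lia. Qed.

Lemma d1_homo i : {homo d1 i : a b / (a < b)%N}.
Proof. rewrite /d1 /d0 => a b Hab; case: eqP => ?; case: eqP => ?; lia. Qed.

Lemma d0_bnd n M y : (4 * n + 8 <= M)%N -> (y <= n)%N -> (d0 y < M)%N.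
Proof. rewrite /d0; lia. Qed.

Lemma d1_bnd i n M y : (4 * n + 8 <= M)%N -> (y <= n)%N -> (d1 i y < M)%N.
Proof. rewrite /d1 /d0; case: eqP => ?; lia. Qed.

Section Valid.
Variables (i n M : nat).
Hypotheses (Hi : (i < n)%N) (HM : (4 * n + 8 <= M)%N).

Lemma valid1 : valid d0 i (4 * i + 1) n M.
Proof.
split; [exact: d0_homo| rewrite /d0; lia | rewrite /d0; lia | lia |].
apply: ins_bound; [move=> y; exact: d0_bnd | lia].
Qed.

Lemma valid2 : valid (d1 i) i (4 * i + 5) n M.
Proof.
split; [exact: d1_homo| rewrite /d1 /d0; case: eqP => ?; lia
  | rewrite /d1 /d0; case: eqP => ?; lia | lia |].
apply: ins_bound; [move=> y; exact: d1_bnd | lia].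
Qed.

Lemma valid3 : valid d0 i.+1 (4 * i + 5) n M.
Proof.
split; [exact: d0_homo| rewrite /d0; lia | rewrite /d0; lia | lia |].
apply: ins_bound; [move=> y; exact: d0_bnd | lia].
Qed.

Lemma valid4 : valid (d1 i) i.+1 (4 * i + 7) n M.
Proof.
split; [exact: d1_homo| rewrite /d1 /d0; case: eqP => ?; lia
  | rewrite /d1 /d0; case: eqP => ?; lia | lia |].
apply: ins_bound; [move=> y; exact: d1_bnd | lia].
Qed.

Lemma valid5 : valid d0 i.+1 (4 * i + 7) n M.
Proof.
split; [exact: d0_homo| rewrite /d0; lia | rewrite /d0; lia | lia |].
apply: ins_bound; [move=> y; exact: d0_bnd | lia].
Qed.
End Valid.

Lemma aux_lt i n M : (i < n)%N -> (4 * n + 8 <= M)%N -> (4 * i + 7 < M)%N.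
Proof. lia. Qed.
Lemma aux_eq i : (4 * i.+1 + 1 = 4 * i + 5)%N.
Proof. lia. Qed.

Section Main.
Variables (R : realType) (dsp : Order.disp_t) (X : finOrderType dsp) (n : nat)
  (A : n.-tuple X -> {ffun X -> R}).
Hypotheses (Hn : (0 < n)%N) (HA : is_rand_alg A).

Definition FF (D : n.-tuple X) (q : X) : R := \sum_(x | (x <= q)%O) A D x.

Lemma sum_sub (D : n.-tuple X) (P Q : pred X) : (forall x, P x -> Q x) ->
  \sum_(x | P x) A D x <= \sum_(x | Q x) A D x.
Proof.
move=> PQ; rewrite [X in X <= _]big_mkcond [X in _ <= X]big_mkcond /=.
apply: ler_sum => x _; case: ifP => Px; first by rewrite (PQ _ Px).
by case: ifP => // _; exact: (HA D).1.
Qed.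

Lemma sum_compl (D : n.-tuple X) (P : pred X) :
  \sum_(x | ~~ P x) A D x = 1 - \sum_(x | P x) A D x.
Proof. have := (HA D).2; rewrite (bigID P) /=; lra. Qed.

Lemma FF_ge0 D q : 0 <= FF D q.
Proof. by apply: sumr_ge0 => x _; exact: (HA D).1. Qed.

Lemma FF_le1 D q : FF D q <= 1.
Proof.
rewrite -(HA D).2; rewrite /FF.
have -> : \sum_x A D x = \sum_(x | true) A D x by [].
exact: sum_sub.
Qed.

Lemma FF_split D q1 q2 : (q1 <= q2)%O ->
  FF D q2 - FF D q1 = \sum_(x in [set x | (q1 < x)%O && (x <= q2)%O]) A D x.
Proof.
move=> H12; rewrite /FF (bigID (fun x => (x <= q1)%O)) /=.
have -> : \sum_(i | (i <= q2)%O && (i <= q1)%O) A D i = \sum_(i | (i <= q1)%O) A D i.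
  apply: eq_bigl => x; apply/andP/idP => [[]//|H]; split => //; exact: le_trans H H12.
rewrite addrC addrK; apply: eq_bigl => x; rewrite inE -ltNge andbC //.
Qed.

Lemma foldr_min_mem (l : seq X) a : Order.min a a = a -> foldr Order.min a l \in a :: l.
Proof.
move=> _; elim: l => [|z l IH] /=; first exact: mem_head.
case: (leP z (foldr Order.min a l)) => _; first by rewrite !inE eqxx orbT.
move: IH; rewrite !inE => /orP[->//|->]; by rewrite !orbT.
Qed.

Lemma foldr_max_mem (l : seq X) a : foldr Order.max a l \in a :: l.
Proof.
elim: l => [|z l IH] /=; first exact: mem_head.
case: (leP z (foldr Order.max a l)) => _; last by rewrite !inE eqxx orbT.
move: IH; rewrite !inE => /orP[->//|->]; by rewrite !orbT.
Qed.

Lemma tmin_mem (D : n.-tuple X) y : tmin D y \in (D : seq X).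
Proof.
rewrite /tmin; case: D => [[|a l] /= Hs]; first by move: Hs Hn => /eqP <-.
have := @foldr_min_mem (a :: l) a (minxx a); rewrite /= !inE.
by case/orP=> [/eqP->|//]; rewrite eqxx.
Qed.

Lemma tmax_mem (D : n.-tuple X) y : tmax D y \in (D : seq X).
Proof.
rewrite /tmax; case: D => [[|a l] /= Hs]; first by move: Hs Hn => /eqP <-.
have := @foldr_max_mem (a :: l) a; rewrite /= !inE.
by case/orP=> [/eqP->|//]; rewrite eqxx.
Qed.

Lemma interior_le (D : n.-tuple X) x : interior D x ->
  exists2 a, a \in (D : seq X) & (a <= x)%O.
Proof. by case/andP => H1 _; exists (tmin D x) => //; exact: tmin_mem. Qed.

Lemma interior_ge (D : n.-tuple X) x : interior D x ->
  exists2 a, a \in (D : seq X) & (x <= a)%O.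
Proof. by case/andP => _ H2; exists (tmax D x) => //; exact: tmax_mem. Qed.

Lemma disc_close (K : nat) (v w : R) : (0 < K)%N -> 0 <= v <= 1 -> 0 <= w <= 1 ->
  (inord (Num.truncn (K%:R * v)) : 'I_K.+1) = inord (Num.truncn (K%:R * w)) ->
  v - w < 1 / K%:R.
Proof.
move=> HK /andP[v0 v1] /andP[w0 w1].
have HK' : (0 : R) < K%:R by rewrite ltr0n.
have bnd : forall u : R, 0 <= u <= 1 -> (Num.truncn (K%:R * u) < K.+1)%N.
  move=> u /andP[u0 u1]; rewrite truncn_lt_nat ?mulr_ge0 //.
  apply: le_lt_trans (_ : K%:R * 1 < _); first by rewrite ler_wpM2l // ltW.
  by rewrite mulr1 ltr_nat.
move/(congr1 val); rewrite /= !inordK ?bnd ?v0 ?v1 ?w0 ?w1 // => E.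
have := truncn_itv (mulr_ge0 (ltW HK') v0); have := truncn_itv (mulr_ge0 (ltW HK') w0).
rewrite E => /andP[Hw1 Hw2] /andP[Hv1 Hv2].
rewrite ltr_pdivlMr // mulrBl.
move: Hw1 Hw2 Hv1 Hv2; rewrite -!natr1 !(mulrC _ K%:R); lra.
Qed.



Lemma main_contra (eps dl : R) : 0 < eps < 1 / 4 ->
  dl <= 1 / (50 * (n%:R) ^+ 2) -> diff_private eps dl A ->
  solves_interior (3 / 4) A ->
  (#|X| < iter n.+1 (rstep ((32 * n + 1) * (n + 1)))
            ((32 * n + 1) * (n + 1) + 4 * n + 8))%N.
Proof.
move=> He Hdl HDP HSI.
set b := ((32 * n + 1) * (n + 1))%N.
set N0 := (b + 4 * n + 8)%N.
have HN0 : (N0 <= iter n.+1 (rstep b) N0)%N.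
  by case: (iter_rstep n.+1 (_ : b + 3 <= N0)%N (_ : 4 <= N0)%N (ltnW (tow_gt N0)));
    rewrite /N0 //; lia.
rewrite ltnNge; apply/negP => Hbig.
case Ee: (enum X) => [|x0 l0].
  by move: Hbig; rewrite cardE Ee leqn0 => /eqP H; move: HN0; rewrite H /N0; lia.
pose K := (32 * n)%N.
pose disc (v : R) : 'I_K.+1 := inord (Num.truncn (K%:R * v)).
pose Dj (t : seq X) (j : 'I_n.+1) : n.-tuple X := [tuple nth x0 t (bump j k) | k < n].
pose col (t : seq X) : {ffun 'I_n.+1 -> 'I_K.+1} :=
  [ffun j => disc (FF (Dj t j) (nth x0 t j))].
have HC : (#|{ffun 'I_n.+1 -> 'I_K.+1}| <= 2 ^ b)%N.
  rewrite card_ffun !card_ord /b expnM.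
  have -> : (32 * n + 1 = K.+1)%N by rewrite /K; lia.
  by rewrite addn1 leq_exp2r // ltnW // ltn_expl.
set s := sort <=%O (enum X).
have Hss : size s = #|X| by rewrite size_sort cardE.
have Hs' : (iter n.+1 (rstep b) N0 <= size s)%N by rewrite Hss.
have [h [Hhs Hh [c0 Hc0]]] := ramsey x0 HC col Hs'.
have hsort : sorted <%O h.
  apply: subseq_lt_sorted Hhs _; rewrite sort_lt_sorted; exact: enum_uniq.
pose hh k := nth x0 h k.
have hh_lt : forall k l, (k < l)%N -> (l < N0)%N -> (hh k < hh l)%O.
  move=> k l Hkl HlN; rewrite /hh (lt_sorted_ltn_nth x0 hsort) // inE Hh //.
  exact: ltn_trans Hkl HlN.
have Hkey : forall (dd : nat -> nat) j r, valid dd j r n N0 ->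
    disc (FF [tuple hh (dd k) | k < n] (hh r)) = c0 (inord j).
  move=> dd j r [Hdd H1 H2 Hj Hb].
  set g := ins dd j r.
  have Hg : {homo g : a b / (a < b)%N} by exact: ins_homo.
  set t := mkseq (fun x => hh (g x)) n.+1.
  have Ht : subseq t h.
    have -> : t = map (nth x0 h) (map g (iota 0 n.+1)) by rewrite /t /mkseq -map_comp.
    have {2}-> : h = map (nth x0 h) (iota 0 N0) by rewrite map_nth_iota0 ?Hh // take_oversize ?Hh.
    apply: map_subseq; apply: subseq_iota_sorted.
      by apply: (homo_sorted (e := ltn)) => //; exact: iota_ltn_sorted.
    apply/allP => y /mapP[x]; rewrite mem_iota add0n => /andP[_ Hx] ->.
    by rewrite add0n Hb.
  have Hcol := Hc0 t Ht (size_mkseq _ _).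
  set jj : 'I_n.+1 := inord j.
  have := congr1 (fun f : {ffun 'I_n.+1 -> 'I_K.+1} => f jj) Hcol.
  rewrite /= /col ffunE.
  have Hjj : (jj : nat) = j by rewrite /jj inordK.
  have -> : nth x0 t jj = hh r by rewrite Hjj nth_mkseq // /g ins_j.
  suff -> : Dj t jj = [tuple hh (dd k) | k < n] by [].
  apply: eq_mktuple => k; rewrite nth_mkseq Hjj; first by rewrite /g ins_bump.
  rewrite /bump; case: (j <= k)%N; move: (ltn_ord k); lia.
pose D := [tuple hh (d0 k) | k < n].
have memD : forall a, a \in (D : seq X) -> exists k, (k < n)%N /\ a = hh (4 * k + 4)%N.
  move=> a /tnthP[k ->]; exists k; split => //; by rewrite tnth_mktuple.
pose f i := FF D (hh (4 * i + 1)%N).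
have f0 : f 0%N <= 1 / 4.
  have H : f 0%N <= \sum_(x | ~~ interior D x) A D x.
    apply: sum_sub => x Hx; apply/negP => /interior_le[a /memD[k [Hk ->]] Hax].
    have Hlt : (hh 1%N < hh (4 * k + 4)%N)%O by apply: hh_lt; rewrite /N0; lia.
    by move: Hlt; rewrite ltNge => /negP; apply; exact: le_trans Hax Hx.
  rewrite sum_compl in H; have := HSI D; lra.
have fn : 3 / 4 <= f n.
  apply: le_trans (HSI D) _; apply: sum_sub => x /interior_ge[a /memD[k [Hk ->]] Hax].
  apply: le_trans Hax (ltW (hh_lt _ _ _ _)); rewrite /N0; lia.
have n0 : (0 : R) < n%:R by rewrite ltr0n.
have [i Hi Hjump] : exists2 i, (i < n)%N & 1 / (2 * n%:R) <= f i.+1 - f i.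
  case: (boolP [exists i : 'I_n, 1 / (2 * n%:R) <= f i.+1 - f i]).
    by case/existsP => i Hi; exists i.
  rewrite negb_exists => /forallP Hall.
  have : \sum_(0 <= k < n) (f k.+1 - f k) < \sum_(0 <= k < n) (1 / (2 * n%:R)).
    apply: ltr_sum_nat => // k /andP[_ Hk].
    by have := Hall (Ordinal Hk); rewrite /= -ltNge.
  rewrite telescope_sumr // sumr_const_nat subn0.
  have -> : (1 / (2 * n%:R)) *+ n = 1 / 2 :> R.
    by rewrite -[_ *+ n]mulr_natr; field; rewrite gt_eqF.
  lra.
pose D' := [tuple hh (d1 i k) | k < n].
have HM : (4 * n + 8 <= N0)%N by rewrite /N0 -addnA leq_addl.
have K1 : disc (FF D (hh (4 * i + 1)%N)) = c0 (inord i) by apply: Hkey; exact: valid1.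
have K2 : disc (FF D' (hh (4 * i + 5)%N)) = c0 (inord i) by apply: Hkey; exact: valid2.
have K3 : disc (FF D (hh (4 * i + 5)%N)) = c0 (inord i.+1) by apply: Hkey; exact: valid3.
have K4 : disc (FF D' (hh (4 * i + 7)%N)) = c0 (inord i.+1) by apply: Hkey; exact: valid4.
have K5 : disc (FF D (hh (4 * i + 7)%N)) = c0 (inord i.+1) by apply: Hkey; exact: valid5.
have HK : (0 < K)%N by rewrite /K muln_gt0 Hn.
have FFb : forall D1 q, 0 <= FF D1 q <= 1 by move=> D1 q; rewrite FF_ge0 FF_le1.
have Hclose : forall D1 D2 q1 q2, disc (FF D1 q1) = disc (FF D2 q2) ->
    FF D1 q1 - FF D2 q2 < 1 / K%:R.
  by move=> D1 D2 q1 q2 E; exact: disc_close HK (FFb D1 q1) (FFb D2 q2) E.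
have fi1 : f i.+1 = FF D (hh (4 * i + 5)%N).
  by rewrite /f aux_eq.
have c1 := Hclose D' D _ _ (etrans K2 (esym K1)).
have c2 := Hclose D D' _ _ (etrans K3 (esym K4)).
have c3 := Hclose D D _ _ (etrans K5 (esym K3)).
rewrite -fi1 in c2 c3.
have H57 : (4 * i + 7 < N0)%N := aux_lt _ _ _ Hi HM.
have Hnb : neighbors D' D.
  rewrite /neighbors; apply/eqP.
  suff -> : [set k : 'I_n | tnth D' k != tnth D k] = [set Ordinal Hi] by rewrite cards1.
  apply/setP => k; rewrite !inE !tnth_mktuple /d1 /d0 -val_eqE /=.
  case: (eqVneq (k : nat) i) => [Ek|Nk]; last by rewrite eqxx.
  rewrite Ek; apply/negP => /eqP E.
  have Hl : (hh (4 * i + 4)%N < hh (4 * i + 6)%N)%O.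
    by apply: hh_lt; [rewrite ltn_add2l | apply: leq_ltn_trans H57; rewrite leq_add2l].
  by move: Hl; rewrite E ltxx.
have H12 : (hh (4 * i + 5)%N <= hh (4 * i + 7)%N)%O.
  by apply/ltW/hh_lt => //; rewrite ltn_add2l.
have HDPi := HDP D' D Hnb [set x | (hh (4 * i + 5)%N < x)%O && (x <= hh (4 * i + 7)%N)%O].
rewrite -(FF_split D' _ _ H12) -(FF_split D _ _ H12) -fi1 in HDPi.
have b0 : 0 <= FF D (hh (4 * i + 7)%N) - f i.+1.
  by rewrite fi1 (FF_split D _ _ H12); apply: sumr_ge0 => x _; exact: (HA D).1.
set E := expR eps in HDPi.
have E0 : 0 < E by exact: expR_gt0.
have E2 : E <= 2.
  have h1 := expR_ge1Dx (- eps); rewrite expRN -/E in h1.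
  have h2 : E^-1 * E = 1 by rewrite mulVf // gt_eqF.
  have h3 : 0 <= E^-1 * E - (1 - eps) * E.
    by rewrite -mulrBl; apply: mulr_ge0; [rewrite subr_ge0 | exact: ltW].
  move: He => /andP[e0 e1]; nra.
have EB : E * (FF D (hh (4 * i + 7)%N) - f i.+1) <= 2 * (FF D (hh (4 * i + 7)%N) - f i.+1).
  exact: ler_wpM2r.
pose y : R := 1 / n%:R.
have y0 : 0 < y by rewrite /y divr_gt0.
have y1 : y <= 1 by rewrite /y ler_pdivrMr // mul1r ler1n.
have yK : 1 / K%:R = y / 32 by rewrite /y /K natrM; field; rewrite gt_eqF.
have y2 : 1 / (2 * n%:R) = y / 2 by rewrite /y; field; rewrite gt_eqF.
have y3 : 1 / (50 * n%:R ^+ 2) = y ^+ 2 / 50 by rewrite /y; field; rewrite gt_eqF.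
have y4 : y ^+ 2 <= y by rewrite expr2 ger_pMl.
rewrite yK in c1 c2 c3; rewrite y2 in Hjump; rewrite y3 in Hdl.
change (FF D (hh (4 * i + 1)%N)) with (f i) in c1.
lra.
Qed.

End Main.

Theorem theorem3p2 (R : realType) (eps : R) (delta : nat -> R)
  (heps : 0 < eps < 1 / 4)
  (hdelta : forall n : nat, (0 < n)%N -> delta n <= 1 / (50 * (n%:R) ^+ 2)) :
  exists c : R, 0 < c /\
    forall (n : nat), (0 < n)%N ->
    forall (d : Order.disp_t) (X : finOrderType d)
           (A : n.-tuple X -> {ffun X -> R}),
      is_rand_alg A ->
      diff_private eps (delta n) A ->
      solves_interior (3 / 4) A ->
      c * ((logstar R #|X|)%:R) <= n%:R.
Proof.
exists (1 / 11); split; first by rewrite divr_gt0.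
move=> n Hn d X A HA HDP HSI.
have H := main_contra R d X n A Hn HA eps (delta n) heps (hdelta n Hn) HDP HSI.
have Hb3 : ((32 * n + 1) * (n + 1) + 3 <= (32 * n + 1) * (n + 1) + 4 * n + 8)%N.
  by rewrite -!addnA leq_add2l; lia.
have Hb4 : (4 <= (32 * n + 1) * (n + 1) + 4 * n + 8)%N by rewrite addnC; lia.
have [_ H2] := iter_rstep n.+1 Hb3 Hb4 (N0_bound n).
have L : (logstar R #|X| <= n + 4 + 3 * n.+1)%N.
  apply: logstar_tow; rewrite ler_nat; apply: ltnW; exact: leq_trans H H2.
have L' : (logstar R #|X| <= 11 * n)%N by apply: leq_trans L _; lia.
have L'' : ((logstar R #|X|)%:R <= (11 * n)%:R :> R) by rewrite ler_nat.
rewrite natrM in L''; lra.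
Qed.
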